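(* Let $A\in\mathbb{R}^{n\times n}$ be symmetric positive definite, $b\in\mathbb{R}^n$, $B>0$, $L=\lambda_{\max}(A)$. For $y\in\mathbb{R}^n$ and $0<\eta\le 1/n$, define the threshold loop $\theta_0=0$, $\theta_{t+1}=\theta_t+\eta\big[\|\mathcal S_{\theta_t}(y)\|_1-B\big]_+$, where $\mathcal S_\theta(y)$ is computed by the two-layer ReLU network $W_2\,\mathrm{ReLU}(W_1y-\theta[\mathbf 1_n;\mathbf 1_n])$ with $W_1=\begin{bmatrix}I_n\\-I_n\end{bmatrix}$, $W_2=[I_n\ \ -I_n]$. Then $\theta_t$ converges to some $\theta^\star\ge0$ and $\mathcal S_{\theta^\star}(y)=\operatorname{Proj}_{\{\|x\|_1\le B\}}(y)$ is the exact Euclidean projection of $y$ onto the $\ell_1$-ball of radius $B$. Consequently, a gradient step $y_k=x_k-\gamma(Ax_k+b)$ followed by this loop yields $x_{k+1}=\operatorname{Proj}_{\{\|x\|_1\le B\}}\big(x_k-\gamma(Ax_k+b)\big)$, and if $0<\gamma\le1/L$, the iterates $x_k$ converge to an optimal solution of $\min_x \tfrac12x^\top Ax+b^\top x$ subject to $\|x\|_1\le B$.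
   Context: $\mathcal S_\theta(y)=\operatorname{sign}(y)\odot(|y|-\theta)_+$ is coordinatewise soft-thresholding; $[u]_+=\max\{u,0\}$; $\mathrm{ReLU}$ is applied elementwise; $\mathbf 1_n$ is the all-ones vector; $\operatorname{Proj}_{\{\|x\|_1\le B\}}$ denotes Euclidean projection onto $\{x:\|x\|_1\le B\}$. *)

(* Defs.v *)
From HB Require Import structures.
From mathcomp Require Import all_boot all_order all_algebra.
From mathcomp Require Import all_classical all_reals all_analysis.
Set Implicit Arguments. Unset Strict Implicit. Unset Printing Implicit Defensive.
Import Order.TTheory GRing.Theory Num.Theory.
Import numFieldNormedType.Exports.
Local Open Scope ring_scope.

Section Defs.
Variables (R : realType) (n : nat).

Definition l1norm (x : 'cV[R]_n) : R := \sum_(i < n) `|x i 0|.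
Definition sqnorm2 (x : 'cV[R]_n) : R := \sum_(i < n) (x i 0) ^+ 2.

Definition soft (theta : R) (y : 'cV[R]_n) : 'cV[R]_n :=
  \col_i (Num.sg (y i 0) * Num.max (`|y i 0| - theta) 0).

Definition relu m (v : 'cV[R]_m) : 'cV[R]_m := map_mx (fun z => Num.max z 0) v.
Definition W1 : 'M[R]_(n + n, n) := col_mx 1%:M (- 1%:M).
Definition W2 : 'M[R]_(n, n + n) := row_mx 1%:M (- 1%:M).
Definition net (theta : R) (y : 'cV[R]_n) : 'cV[R]_n :=
  W2 *m relu (W1 *m y - theta *: const_mx 1).

Fixpoint theta_seq (eta B : R) (y : 'cV[R]_n) (t : nat) : R :=
  match t with
  | 0 => 0
  | t'.+1 => theta_seq eta B y t' +
             eta * Num.max (l1norm (net (theta_seq eta B y t') y) - B) 0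
  end.

Definition is_l1ball_proj (B : R) (y p : 'cV[R]_n) : Prop :=
  l1norm p <= B /\
  forall x : 'cV[R]_n, l1norm x <= B -> sqnorm2 (p - y) <= sqnorm2 (x - y).

Definition spd (A : 'M[R]_n) : Prop :=
  A^T = A /\ forall v : 'cV[R]_n, v != 0 -> 0 < (v^T *m A *m v) 0 0.

Definition is_lambda_max (A : 'M[R]_n) (L : R) : Prop :=
  eigenvalue A L /\ forall a, eigenvalue A a -> a <= L.

Definition quad_obj (A : 'M[R]_n) (b : 'cV[R]_n) (x : 'cV[R]_n) : R :=
  2^-1 * (x^T *m A *m x) 0 0 + (b^T *m x) 0 0.

Definition is_optimal (A : 'M[R]_n) (b : 'cV[R]_n) (B : R) (xs : 'cV[R]_n) : Prop :=
  l1norm xs <= B /\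
  forall x : 'cV[R]_n, l1norm x <= B -> quad_obj A b xs <= quad_obj A b x.

End Defs.

(* Main.v *)
Require Import Defs.
From HB Require Import structures.
From mathcomp Require Import all_boot all_order all_algebra.
From mathcomp Require Import all_classical all_reals all_analysis.
From mathcomp Require Import ring lra.
Import Order.TTheory GRing.Theory Num.Theory.
Import numFieldNormedType.Exports.
Local Open Scope classical_set_scope.
Local Open Scope ring_scope.
Set Implicit Arguments. Unset Strict Implicit.

Section Dot.
Variables (R : realType) (n : nat).
Implicit Types (u v w x y z : 'cV[R]_n).

Definition dot u v : R := \sum_(i < n) u i 0 * v i 0.

Lemma sqnormE v : sqnorm2 v = dot v v.
Proof. by apply: eq_bigr => i _; rewrite expr2. Qed.

Lemma dotC u v : dot u v = dot v u.
Proof. by apply: eq_bigr => i _; rewrite mulrC. Qed.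

Lemma dotDl u v w : dot (u + v) w = dot u w + dot v w.
Proof. by rewrite /dot -big_split; apply: eq_bigr => i _; rewrite !mxE mulrDl. Qed.

Lemma dotDr u v w : dot w (u + v) = dot w u + dot w v.
Proof. by rewrite dotC dotDl !(dotC w). Qed.

Lemma dotZl a u v : dot (a *: u) v = a * dot u v.
Proof. by rewrite /dot mulr_sumr; apply: eq_bigr => i _; rewrite !mxE mulrA. Qed.

Lemma dotZr a u v : dot v (a *: u) = a * dot v u.
Proof. by rewrite dotC dotZl dotC. Qed.

Lemma dotNl u v : dot (- u) v = - dot u v.
Proof. by rewrite -scaleN1r dotZl mulN1r. Qed.

Lemma dotNr u v : dot v (- u) = - dot v u.
Proof. by rewrite dotC dotNl dotC. Qed.

Lemma dotBl u v w : dot (u - v) w = dot u w - dot v w.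
Proof. by rewrite dotDl dotNl. Qed.

Lemma dotBr u v w : dot w (u - v) = dot w u - dot w v.
Proof. by rewrite dotDr dotNr. Qed.

Lemma dot0l v : dot 0 v = 0.
Proof. by rewrite /dot big1 // => i _; rewrite mxE mul0r. Qed.

Lemma dot_ge0 v : 0 <= dot v v.
Proof. by apply: sumr_ge0 => i _; rewrite -expr2 sqr_ge0. Qed.

Lemma dot_eq0 v : dot v v = 0 -> v = 0.
Proof.
move=> h; apply/matrixP => i j; rewrite (ord1 j) mxE.
have /psumr_eq0P H : (forall k : 'I_n, true -> 0 <= v k 0 * v k 0).
  by move=> k _; rewrite -expr2 sqr_ge0.
by move/eqP: (H h i isT); rewrite mulf_eq0 orbb => /eqP.
Qed.

Lemma dot_mulmx (A : 'M[R]_n) u v : dot u (A *m v) = dot (A^T *m u) v.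
Proof.
rewrite /dot; under eq_bigr => i _ do rewrite mxE mulr_sumr.
rewrite exchange_big /=; apply: eq_bigr => j _; rewrite mxE mulr_suml.
by apply: eq_bigr => i _; rewrite !mxE mulrCA mulrA.
Qed.

Lemma qfE (A : 'M[R]_n) v : (v^T *m A *m v) 0 0 = dot v (A *m v).
Proof. by rewrite -mulmxA mxE; apply: eq_bigr => i _; rewrite mxE. Qed.

Lemma linE (b v : 'cV[R]_n) : (b^T *m v) 0 0 = dot b v.
Proof. by rewrite mxE; apply: eq_bigr => i _; rewrite mxE. Qed.

Lemma l1norm_ge0 v : 0 <= l1norm v.
Proof. by apply: sumr_ge0 => i _; rewrite normr_ge0. Qed.

Lemma l1normD u v : l1norm (u + v) <= l1norm u + l1norm v.
Proof. by rewrite /l1norm -big_split; apply: ler_sum => i _; rewrite mxE ler_normD. Qed.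

Lemma l1normZ a v : l1norm (a *: v) = `|a| * l1norm v.
Proof. by rewrite /l1norm mulr_sumr; apply: eq_bigr => i _; rewrite mxE normrM. Qed.

Lemma l1norm_coord v i : `|v i 0| <= l1norm v.
Proof.
rewrite /l1norm (bigD1 i) //= lerDl; apply: sumr_ge0 => k _; exact: normr_ge0.
Qed.

Lemma l1_convex u v B t : 0 <= t -> t <= 1 -> l1norm u <= B -> l1norm v <= B ->
  l1norm (u + t *: (v - u)) <= B.
Proof.
move=> t0 t1 hu hv.
have -> : u + t *: (v - u) = (1 - t) *: u + t *: v.
  by rewrite scalerBr scalerBl scale1r addrA addrAC.
apply: le_trans (l1normD _ _) _; rewrite !l1normZ (ger0_norm t0) ger0_norm; last lra.
nra.
Qed.

End Dot.

Lemma quad_pos (R : realType) (a b : R) :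
  (forall t, 0 < t -> t <= 1 -> 0 <= a * t + b * t ^+ 2) -> 0 <= a.
Proof.
move=> h; rewrite leNgt; apply/negP => a0.
pose c := `|b|.
have hc : 0 <= c by rewrite normr_ge0.
have hb : b <= c by rewrite ler_norm.
have hb' : - c <= b by rewrite /c; move: (ler_norm (- b)); rewrite normrN; lra.
pose t := - a / (- a + c + 1).
have den : 0 < - a + c + 1 by lra.
have t0 : 0 < t by rewrite /t divr_gt0 //; lra.
have t1 : t <= 1 by rewrite /t ler_pdivrMr //; lra.
have := h t t0 t1.
have -> : a * t + b * t ^+ 2 = t * (a + b * t) by ring.
rewrite pmulr_rge0 //.
have : b * t <= c * t by rewrite ler_pM2r.
have : c * t < - a.
  rewrite /t mulrA ltr_pdivrMr //. nra.
lra.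
Qed.

Section Proj.
Variables (R : realType) (n : nat).
Implicit Types (u v w x y z p q : 'cV[R]_n).

Lemma sqnormD u v : sqnorm2 (u + v) = sqnorm2 u + 2 * dot u v + sqnorm2 v.
Proof. rewrite !sqnormE dotDl !dotDr (dotC v u); ring. Qed.

Lemma sqnormZ a v : sqnorm2 (a *: v) = a ^+ 2 * sqnorm2 v.
Proof. rewrite !sqnormE dotZl dotZr; ring. Qed.

Lemma sqnormB u v : sqnorm2 (u - v) = sqnorm2 u - 2 * dot u v + sqnorm2 v.
Proof. rewrite sqnormD -scaleN1r sqnormZ dotZr; ring. Qed.

Lemma sqnorm_ge0 v : 0 <= sqnorm2 v.
Proof. by rewrite sqnormE dot_ge0. Qed.

Lemma proj_VI B z p x : is_l1ball_proj B z p -> l1norm x <= B ->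
  0 <= dot (p - z) (x - p).
Proof.
move=> [pB hp] xB.
suff : 0 <= (2 * dot (p - z) (x - p)) by lra.
apply: (@quad_pos _ _ (sqnorm2 (x - p))) => t t0 t1.
have := hp _ (l1_convex (ltW t0) t1 pB xB).
have -> : p + t *: (x - p) - z = (p - z) + t *: (x - p) by rewrite addrAC.
rewrite [sqnorm2 (_ + t *: _)]sqnormD sqnormZ dotZr; lra.
Qed.

Lemma proj_nonexp B z1 z2 p1 p2 : is_l1ball_proj B z1 p1 -> is_l1ball_proj B z2 p2 ->
  sqnorm2 (p1 - p2) <= sqnorm2 (z1 - z2).
Proof.
move=> h1 h2.
have a1 := proj_VI h1 (proj1 h2).
have a2 := proj_VI h2 (proj1 h1).
have ge := sqnorm_ge0 ((z1 - z2) - (p1 - p2)).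
move: a1 a2 ge; rewrite !sqnormE !(dotBl, dotBr).
rewrite (dotC p2 p1) (dotC z2 z1) (dotC z1 p1) (dotC z2 p1) (dotC z1 p2) (dotC z2 p2).
lra.
Qed.

Lemma proj_unique B z p q : is_l1ball_proj B z p -> is_l1ball_proj B z q -> p = q.
Proof.
move=> hp hq; have := proj_nonexp hp hq; rewrite subrr !sqnormE dot0l => h.
apply/eqP; rewrite -subr_eq0; apply/eqP/dot_eq0.
by apply/le_anti; rewrite h dot_ge0.
Qed.

Lemma coord_ineq (th x y : R) : 0 <= th ->
  2 * th * (`|Num.sg y * Num.max (`|y| - th) 0| - `|x|) <=
  (x - y) ^+ 2 - (Num.sg y * Num.max (`|y| - th) 0 - y) ^+ 2.
Proof.
move=> th0.
have hx1 := ler_norm x; have hx2 : - x <= `|x| by rewrite -normrN ler_norm.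
have k1 : th * x <= th * `|x| by rewrite ler_wpM2l.
have k2 : th * (- x) <= th * `|x| by rewrite ler_wpM2l.
have k3 := sqr_ge0 (x - y - th); have k4 := sqr_ge0 (x - y + th).
have [ax eax] : exists ax : R, `|x| = ax by eexists.
rewrite eax in k1 k2 hx1 hx2 *.
case: (leP (`|y| - th) 0) => h.
  rewrite mulr0 normr0 sub0r.
  have : `|y| <= th by lra.
  case: (ltrgtP y 0) => hy; [rewrite (ltr0_norm hy) | rewrite (gtr0_norm hy) | rewrite hy]; nra.
case: (ltrgtP y 0) => hy.
- rewrite (ltr0_norm hy) in h.
  rewrite ltr0_sg // (ltr0_norm hy) mulN1r normrN ger0_norm; [nra | lra].
- rewrite (gtr0_norm hy) in h.
  rewrite gtr0_sg // (gtr0_norm hy) mul1r ger0_norm; [nra | lra].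
- rewrite hy normr0 in h; lra.
Qed.

Lemma soft_proj B (th : R) y : 0 <= th -> l1norm (soft th y) <= B ->
  (th = 0 \/ l1norm (soft th y) = B) -> is_l1ball_proj B y (soft th y).
Proof.
move=> th0 hB hc; split => // x xB.
rewrite -subr_ge0 /sqnorm2 -sumrB.
have H : 2 * th * (l1norm (soft th y) - l1norm x) <=
    \sum_(i < n) ((x - y) i 0 ^+ 2 - (soft th y - y) i 0 ^+ 2).
  rewrite /l1norm -sumrB mulr_sumr; apply: ler_sum => i _.
  rewrite !mxE; exact: coord_ineq.
apply: le_trans H; case: hc => [->|->]; first by rewrite mulr0 mul0r.
by apply: mulr_ge0; [lra | rewrite subr_ge0].
Qed.

End Proj.

Section Part1.
Variables (R : realType) (n : nat).

Lemma net_soft (theta : R) (y : 'cV[R]_n) : 0 <= theta -> net theta y = soft theta y.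
Proof.
move=> th0; rewrite /net /W1 /W2 mul_col_mx !mul1mx mulNmx mul1mx.
rewrite -(col_mx_const n n 1) scale_col_mx opp_col_mx add_col_mx /relu map_col_mx.
rewrite mul_row_col mul1mx mulNmx mul1mx.
apply/matrixP => i j; rewrite !mxE; rewrite (ord1 j).
case: (ltrgtP (y i 0) 0) => hy.
- rewrite ltr0_sg // ltr0_norm //.
  rewrite !mulr1 !maxEle; do ! case: leP => ?; lra.
- rewrite gtr0_sg // gtr0_norm //.

  rewrite !mulr1 !maxEle; do ! case: leP => ?; lra.
- rewrite hy sgr0 mul0r !mulr1 !maxEle; do ! case: leP => ?; lra.
Qed.

End Part1.

Section Loop.
Variables (R : realType) (n : nat) (B eta : R) (y : 'cV[R]_n).

Definition f (th : R) := l1norm (soft th y).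

Lemma soft_abs (th : R) i : 0 <= th -> `|soft th y i 0| = Num.max (`|y i 0| - th) 0.
Proof.
move=> th0; rewrite mxE normrM normr_sg.
have [->|yn0] := eqVneq (y i 0) 0.
  by rewrite normr0 mul0r sub0r max_r // oppr_le0.
by rewrite mul1r ger0_norm // le_max lexx orbT.
Qed.

Lemma f_ge0 (th : R) : 0 <= f th.
Proof. exact: l1norm_ge0. Qed.

Lemma f_anti (a b : R) : 0 <= a -> a <= b -> f b <= f a.
Proof.
move=> a0 ab; apply: ler_sum => i _; rewrite !soft_abs //; last exact: le_trans ab.
have [ay ->] : exists ay : R, `|y i 0| = ay by eexists.
case: (leP (ay - a) 0) => ?; case: (leP (ay - b) 0) => ?; lra.
Qed.

Lemma f_lip (a b : R) : 0 <= a -> a <= b -> f a <= f b + (n%:R : R) * (b - a).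
Proof.
move=> a0 ab.
have -> : (n%:R : R) * (b - a) = \sum_(i < n) (b - a).
  by rewrite sumr_const card_ord mulr_natl.
rewrite /f /l1norm -big_split; apply: ler_sum => i _ /=.
rewrite !soft_abs //; last exact: le_trans ab.
have [ay ->] : exists ay : R, `|y i 0| = ay by eexists.
case: (leP (ay - a) 0) => ?; case: (leP (ay - b) 0) => ?; lra.
Qed.

Lemma f_pos_bound (th : R) : 0 <= th -> 0 < f th -> th <= l1norm y.
Proof.
move=> th0 hpos; rewrite leNgt; apply/negP => hlt; move: hpos.
rewrite /f /l1norm big1 ?ltxx // => i _; rewrite soft_abs //.
by apply/max_r; have := l1norm_coord y i; lra.
Qed.

Lemma etan1 (etan : eta <= n%:R^-1) (n0 : (0 < n)%N) : eta * n%:R <= (1 : R).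
Proof.
have np : 0 < n%:R :> R by rewrite ltr0n.
by move: etan; rewrite -[n%:R^-1]mul1r ler_pdivlMr.
Qed.

Definition th t := theta_seq eta B y t.

Lemma th_ge0 (eta0 : 0 < eta) t : 0 <= th t.
Proof.
elim: t => [|t IH] //=; apply: addr_ge0 => //.
by apply: mulr_ge0; [exact: ltW | rewrite le_max lexx orbT].
Qed.

Lemma th_step (eta0 : 0 < eta) t : th t.+1 = th t + eta * Num.max (f (th t) - B) 0.
Proof. by rewrite /th /= net_soft //; exact: th_ge0. Qed.

Lemma th_incr (eta0 : 0 < eta) t : th t <= th t.+1.
Proof.
rewrite (th_step eta0) lerDl; apply: mulr_ge0; [exact: ltW | by rewrite le_max lexx orbT].
Qed.

Lemma th_ub (n0 : (0 < n)%N) (B0 : 0 < B) (eta0 : 0 < eta) (etan : eta <= n%:R^-1) t : th t <= l1norm y.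
Proof.
elim: t => [|t IH]; first exact: l1norm_ge0.
have h0 := th_ge0 eta0 t; have h1 := th_incr eta0 t.
case: (leP (f (th t) - B) 0) => hf.
  by rewrite (th_step eta0) maxEle hf mulr0 addr0.
apply: f_pos_bound; first exact: th_ge0.
have := f_lip h0 h1; rewrite (th_step eta0) maxEle ifN -?ltNge //.
have := etan1 etan n0; have := f_ge0 (th t + eta * (f (th t) - B)).
move: (f (th t + eta * (f (th t) - B))) => F.
move: hf; move: (f (th t)) => G hf hF hn hG.
rewrite addrAC subrr add0r in hG.
have hX : n%:R * (eta * (G - B)) <= G - B.
  rewrite mulrA [n%:R * eta]mulrC -[leRHS]mul1r ler_pM2r //.
move: hG hX; move: (n%:R * (eta * (G - B))) => X.
lra.
Qed.

Lemma loop_conv (n0 : (0 < n)%N) (B0 : 0 < B) (eta0 : 0 < eta) (etan : eta <= n%:R^-1) :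
  exists ths : R, 0 <= ths /\ theta_seq eta B y @ \oo --> ths /\
    is_l1ball_proj B y (net ths y).
Proof.
have np : 0 < n%:R :> R by rewrite ltr0n.
have hn1 := etan1 etan n0.
case: (leP (f 0) B) => hf0.
  have hz : forall t, th t = 0.
    elim => // t IH; rewrite (th_step eta0) IH maxEle ifT ?mulr0 ?addr0 //.
    by rewrite subr_le0.
  exists 0; split => //; split.
    have -> : theta_seq eta B y = fun=> 0 by apply: funext => t; exact: hz t.
    exact: cvg_cst.
  by rewrite net_soft //; apply: soft_proj => //; left.
have inv : forall t, B <= f (th t).
  elim => [|t IH]; first exact: ltW.
  have h0 := th_ge0 eta0 t; have h1 := th_incr eta0 t.
  have := f_lip h0 h1; rewrite (th_step eta0).
  case: (leP (f (th t) - B) 0) => hc; first by rewrite mulr0 addr0.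
  move: IH; move: (f (th t)) (f (th t + eta * (f (th t) - B))) => G F hG.
  rewrite addrAC subrr add0r.
  have hX : n%:R * (eta * (G - B)) <= G - B.
    rewrite mulrA [n%:R * eta]mulrC -[leRHS]mul1r ler_wpM2r //.
    by rewrite subr_ge0.
  move: hX; move: (n%:R * (eta * (G - B))) => X.
  lra.
have hs : has_sup (range th).
  split; first by exists (th 0); exists 0.
  by exists (l1norm y) => _ [t _ <-]; exact: th_ub.
set ths := sup (range th).
have hle : forall t, th t <= ths by move=> t; apply: sup_upper_bound => //; exists t.
have ths0 : 0 <= ths := le_trans (th_ge0 eta0 0) (hle 0).
have hfB : f ths <= B.
  rewrite leNgt; apply/negP => hgt.
  have ed : 0 < eta * (f ths - B) by rewrite mulr_gt0 // subr_gt0.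
  have [_ [t _ <-] ht] := sup_adherent ed hs.
  have := hle t.+1; rewrite (th_step eta0) maxEle ifN; last first.
    rewrite -ltNge subr_gt0; apply: lt_le_trans hgt _.
    exact: f_anti (th_ge0 eta0 t) (hle t).
  have := f_anti (th_ge0 eta0 t) (hle t).
  have : eta * (f ths - B) <= eta * (f (th t) - B).
    by rewrite ler_pM2l // lerD2r; exact: f_anti (th_ge0 eta0 t) (hle t).
  move: ht; rewrite -/ths.
  move: (eta * (f ths - B)) (eta * (f (th t) - B)) => U V.
  lra.
have hBf : B <= f ths.
  rewrite leNgt; apply/negP => hlt.
  have ep : 0 < (B - f ths) / (n%:R + 1).
    by rewrite divr_gt0 // ?subr_gt0 //; lra.
  have [_ [t _ <-] ht] := sup_adherent ep hs.
  have := f_lip (th_ge0 eta0 t) (hle t).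
  have := inv t.
  have hX : n%:R * (ths - th t) <= n%:R * ((B - f ths) / (n%:R + 1)).
    by rewrite ler_pM2l //; rewrite -/ths in ht; lra.
  have hY : n%:R * ((B - f ths) / (n%:R + 1)) < B - f ths.
    rewrite mulrCA gtr_pMr ?subr_gt0 // ltr_pdivrMr; lra.
  move: hX hY; move: (n%:R * (ths - th t)) (n%:R * ((B - f ths) / (n%:R + 1))) => X Y.
  move: (f (th t)) (f ths) => G F.
  lra.
exists ths; split => //; split.
  apply: nondecreasing_cvgn; last by exists (l1norm y) => _ [t _ <-]; exact: th_ub.
  by apply/nondecreasing_seqP => t; exact: th_incr.
rewrite net_soft //; apply: soft_proj => //.
by right; apply/eqP; rewrite eq_le; apply/andP; split; [exact: hfB | exact: hBf].
Qed.

End Loop.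

Section Compactness.
Variables (R : realType) (n : nat).
Implicit Types (f g : 'rV[R]_n -> R).

Lemma contD f g : continuous f -> continuous g -> continuous (fun v => f v + g v).
Proof. by move=> hf hg x; exact: (continuousD (hf x) (hg x)). Qed.

Lemma contM f g : continuous f -> continuous g -> continuous (fun v => f v * g v).
Proof. by move=> hf hg x; exact: (continuousM (hf x) (hg x)). Qed.

Lemma contN f : continuous f -> continuous (fun v => - f v).
Proof. by move=> hf x; exact: (continuousN (hf x)). Qed.

Lemma contC (c : R) : continuous (fun _ : 'rV[R]_n => c).
Proof. by move=> x; apply: cst_continuous. Qed.

Lemma contI (i : 'I_n) : continuous (fun v : 'rV[R]_n => v ord0 i).
Proof. exact: coord_continuous. Qed.

Lemma contS k (F : 'I_k -> 'rV[R]_n -> R) :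
  (forall i, continuous (F i)) -> continuous (fun v => \sum_(i < k) F i v).
Proof.
elim: k F => [|k IH] F hF.
  by under eq_fun do rewrite big_ord0; exact: contC.
under eq_fun do rewrite big_ord_recr /=.
apply: contD; last exact: hF.
exact: (IH (fun i => F (widen_ord (leqnSn k) i))).
Qed.

Lemma contNorm f : continuous f -> continuous (fun v => `|f v|).
Proof. by move=> hf x; apply: continuous_comp; [exact: hf| exact: norm_continuous]. Qed.

Lemma box_compact (S : set 'rV[R]_n) c :
  closed S -> (forall v, S v -> forall i, `|v ord0 i| <= c) -> compact S.
Proof.
move=> cS hS.
apply: (subclosed_compact cS (@rV_compact _ _ (fun=> `[(- c), c]%classic) _)).
  by move=> _; exact: segment_compact.
by move=> v /hS h i /=; rewrite in_itv /= -ler_norml.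
Qed.

Lemma min_attained (S : set 'rV[R]_n) f c :
  S !=set0 -> closed S -> (forall v, S v -> forall i, `|v ord0 i| <= c) ->
  continuous f -> exists2 v, S v & forall w, S w -> f v <= f w.
Proof.
move=> S0 cS hS hf.
have [v vS hv] := compact_EVT_min S0 (box_compact cS hS) (continuous_subspaceT hf).
exists v; first by rewrite inE in vS.
by move=> w wS; apply: hv; rewrite inE.
Qed.

Lemma max_attained (S : set 'rV[R]_n) f c :
  S !=set0 -> closed S -> (forall v, S v -> forall i, `|v ord0 i| <= c) ->
  continuous f -> exists2 v, S v & forall w, S w -> f w <= f v.
Proof.
move=> S0 cS hS hf.
have [v vS hv] := min_attained S0 cS hS (contN hf).
by exists v => // w /hv; rewrite lerN2.
Qed.

Lemma closed_eqf f (c : R) : continuous f -> closed [set v | f v = c].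
Proof. by move=> hf; apply: (proj1 (continuous_closedP f) hf _ (@closed_eq _ c)). Qed.

Lemma closed_lef f (c : R) : continuous f -> closed [set v | f v <= c].
Proof. by move=> hf; apply: (proj1 (continuous_closedP f) hf _ (@closed_le _ c)). Qed.

End Compactness.

Section Rayleigh.
Variables (R : realType) (n : nat).
Implicit Types (u v w : 'cV[R]_n) (r : 'rV[R]_n).

Definition qf (A : 'M[R]_n) v := dot v (A *m v).

Lemma qfZ A a v : qf A (a *: v) = a ^+ 2 * qf A v.
Proof. by rewrite /qf -scalemxAr dotZl dotZr expr2 mulrA. Qed.

Lemma qf0 A : qf A 0 = 0.
Proof. by rewrite /qf dot0l. Qed.

Lemma cont_sq : continuous (fun r : 'rV[R]_n => sqnorm2 r^T).
Proof.
have -> : (fun r : 'rV[R]_n => sqnorm2 r^T) =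
    (fun r => \sum_(i < n) (r ord0 i * r ord0 i)).
  by apply: funext => r; apply: eq_bigr => i _; rewrite mxE expr2.
by apply: contS => i; apply: contM; exact: contI.
Qed.

Lemma cont_qf A : continuous (fun r : 'rV[R]_n => qf A r^T).
Proof.
have -> : (fun r : 'rV[R]_n => qf A r^T) =
    (fun r => \sum_(i < n) (r ord0 i * \sum_(j < n) (A i j * r ord0 j))).
  apply: funext => r; apply: eq_bigr => i _; rewrite !mxE; congr (_ * _).
  by apply: eq_bigr => j _; rewrite mxE.
apply: contS => i; apply: contM; first exact: contI.
by apply: contS => j; apply: contM; [exact: contC | exact: contI].
Qed.

Lemma cont_l1 : continuous (fun r : 'rV[R]_n => l1norm r^T).
Proof.
have -> : (fun r : 'rV[R]_n => l1norm r^T) = (fun r => \sum_(i < n) `|r ord0 i|).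
  by apply: funext => r; apply: eq_bigr => i _; rewrite mxE.
by apply: contS => i; apply: contNorm; exact: contI.
Qed.

Lemma cont_lin (b : 'cV[R]_n) : continuous (fun r : 'rV[R]_n => dot b r^T).
Proof.
have -> : (fun r : 'rV[R]_n => dot b r^T) = (fun r => \sum_(i < n) (b i 0 * r ord0 i)).
  by apply: funext => r; apply: eq_bigr => i _; rewrite mxE.
by apply: contS => i; apply: contM; [exact: contC | exact: contI].
Qed.

Lemma coord_sq_le v i : v i 0 ^+ 2 <= sqnorm2 v.
Proof.
rewrite /sqnorm2 (bigD1 i) //= lerDl; apply: sumr_ge0 => k _; exact: sqr_ge0.
Qed.

Lemma sphere_bound r : sqnorm2 r^T = 1 -> forall i, `|r ord0 i| <= 1.
Proof.
move=> h i; have := coord_sq_le r^T i; rewrite h mxE => hh.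
rewrite ler_norml; apply/andP; split; nra.
Qed.

Lemma sphere_ne0 (n0 : (0 < n)%N) : [set r : 'rV[R]_n | sqnorm2 r^T = 1] !=set0.
Proof.
pose k := Ordinal n0.
exists (\row_j (j == k)%:R) => /=.
rewrite /sqnorm2 (bigD1 k) //= big1 => [|j hj]; first by rewrite !mxE eqxx expr1n addr0.
by rewrite !mxE (negbTE hj) expr0n.
Qed.

Lemma sqnorm_pos v : v != 0 -> 0 < sqnorm2 v.
Proof.
move=> hv; rewrite lt_def sqnorm_ge0 andbT; apply: contra hv.
by rewrite sqnormE => /eqP /dot_eq0 ->.
Qed.

Lemma normalize v : v != 0 ->
  let s := sqnorm2 v in let w := (Num.sqrt s)^-1 *: v in
  sqnorm2 w = 1 /\ (forall A, qf A w = s^-1 * qf A v).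
Proof.
move=> hv s w.
have s0 : 0 < s by exact: sqnorm_pos.
have e : (Num.sqrt s)^-1 ^+ 2 = s^-1 by rewrite exprVn sqr_sqrtr // ltW.
split; first by rewrite sqnormZ e mulVf // gt_eqF.
by move=> A; rewrite qfZ e.
Qed.

Lemma ray_homog (A : 'M[R]_n) (c : R) :
  (forall r : 'rV[R]_n, sqnorm2 r^T = 1 -> qf A r^T <= c) ->
  forall v, qf A v <= c * sqnorm2 v.
Proof.
move=> h v; have [->|hv] := eqVneq v 0.
  by rewrite qf0 sqnormE dot0l mulr0.
have [h1 h2] := normalize hv.
have := h _ (etrans (congr1 _ (trmxK _)) h1).
rewrite trmxK h2.
have s0 := sqnorm_pos hv.
by rewrite ler_pdivrMl // mulrC.
Qed.

Lemma ray_homog_ge (A : 'M[R]_n) (c : R) :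
  (forall r : 'rV[R]_n, sqnorm2 r^T = 1 -> c <= qf A r^T) ->
  forall v, c * sqnorm2 v <= qf A v.
Proof.
move=> h v; have [->|hv] := eqVneq v 0.
  by rewrite qf0 sqnormE dot0l mulr0.
have [h1 h2] := normalize hv.
have := h _ (etrans (congr1 _ (trmxK _)) h1).
rewrite trmxK h2.
have s0 := sqnorm_pos hv.
by rewrite ler_pdivlMl // mulrC.
Qed.

Lemma qf_lower (A : 'M[R]_n) : (0 < n)%N -> spd A ->
  exists m, 0 < m /\ forall v, m * sqnorm2 v <= qf A v.
Proof.
move=> n0 [symA posA].
have [c cS hc] := min_attained (sphere_ne0 n0)
   (closed_eqf (c:=1) cont_sq) (fun r h => @sphere_bound r h) (@cont_qf A).
exists (qf A c^T); split.
  rewrite /qf -qfE; apply: posA; apply/eqP => c0.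
  by move: cS; rewrite /= c0 sqnormE dot0l => /eqP; rewrite eq_sym oner_eq0.
by apply: ray_homog_ge => r hr; exact: hc.
Qed.

Lemma qf_upper (A : 'M[R]_n) (L : R) : (0 < n)%N -> spd A -> is_lambda_max A L ->
  forall v, qf A v <= L * sqnorm2 v.
Proof.
move=> n0 [symA posA] [_ hL].
have [c0 cS hc] := max_attained (sphere_ne0 n0)
   (closed_eqf (c:=1) cont_sq) (fun r h => @sphere_bound r h) (@cont_qf A).
set M := qf A c0^T.
have hM : forall v, qf A v <= M * sqnorm2 v by apply: ray_homog => r hr; exact: hc.
set c := c0^T.
have c1 : sqnorm2 c = 1 := cS.
have hsym : forall u v, dot u (A *m v) = dot v (A *m u).
  by move=> u v; rewrite dot_mulmx symA dotC.
have key : forall w, dot w (M *: c - A *m c) = 0.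
  move=> w.
  have H : forall t : R, 0 <= t * (2 * dot w (M *: c - A *m c)) +
                             t ^+ 2 * (M * sqnorm2 w - qf A w).
    move=> t; have := hM (c + t *: w).
    rewrite sqnormD sqnormZ c1 /qf mulmxDr -scalemxAr !dotDl !dotDr !dotZl !dotZr.
    rewrite (hsym c w) -/(qf A c) -/M dotNr (dotC c w).
    lra.
  have p1 : 0 <= 2 * dot w (M *: c - A *m c).
    by apply: quad_pos (M * sqnorm2 w - qf A w) _ => t _ _; rewrite mulrC [_ * t ^+ 2]mulrC; exact: H.
  have p2 : 0 <= - (2 * dot w (M *: c - A *m c)).
    apply: quad_pos (M * sqnorm2 w - qf A w) _ => t _ _.
    by have := H (- t); rewrite sqrrN; lra.
  lra.
have eigc : A *m c = M *: c.
  have := key (M *: c - A *m c) => /dot_eq0 /eqP; rewrite subr_eq0 => /eqP ->.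
  by [].
have : eigenvalue A M.
  apply/eigenvalueP; exists c0.
    by rewrite -[c0]trmxK -symA -trmx_mul -/c eigc; apply/matrixP => i j; rewrite !mxE.
  apply/eqP => h0; move: c1; rewrite /c h0 /sqnorm2 big1 => [|i _]; last by rewrite !mxE expr0n.
  by move/eqP; rewrite eq_sym oner_eq0.
move=> /hL ML v.
apply: le_trans (hM v) _; apply: ler_wpM2r => //; exact: sqnorm_ge0.
Qed.

End Rayleigh.

Section PGD.
Variables (R : realType) (n : nat).
Implicit Types (u v w x d : 'cV[R]_n).

Lemma quad_objE (A : 'M[R]_n) (b : 'cV[R]_n) x :
  quad_obj A b x = 2^-1 * qf A x + dot b x.
Proof. by rewrite /quad_obj qfE linE. Qed.

Lemma quad_expand (A : 'M[R]_n) (b : 'cV[R]_n) x d t : A^T = A ->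
  quad_obj A b (x + t *: d) =
  quad_obj A b x + t * dot d (A *m x + b) + t ^+ 2 * (2^-1 * qf A d).
Proof.
move=> symA; rewrite !quad_objE /qf mulmxDr -scalemxAr !dotDl !dotDr !dotZl !dotZr.
have hs : dot x (A *m d) = dot d (A *m x) by rewrite dot_mulmx symA dotC.
rewrite hs (dotC b d); by field.
Qed.

Lemma opt_exists (A : 'M[R]_n) (b : 'cV[R]_n) (B : R) : 0 < B ->
  exists xs, is_optimal A b B xs.
Proof.
move=> B0.
have cont : continuous (fun r : 'rV[R]_n => quad_obj A b r^T).
  have -> : (fun r : 'rV[R]_n => quad_obj A b r^T) =
      (fun r => 2^-1 * qf A r^T + dot b r^T).
    by apply: funext => r; rewrite quad_objE.
  apply: contD; last exact: cont_lin.
  by apply: contM; [exact: contC | exact: cont_qf].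
have ne : [set r : 'rV[R]_n | l1norm r^T <= B] !=set0.
  exists (0 : 'rV[R]_n); rewrite /= trmx0 /l1norm big1; [exact: ltW | by move=> i _; rewrite mxE normr0].
have bd : forall r : 'rV[R]_n, [set r : 'rV[R]_n | l1norm r^T <= B] r ->
    forall i, `|r ord0 i| <= B.
  move=> r /= hr i; apply: le_trans hr; have := l1norm_coord r^T i; by rewrite mxE.
have [c cS hc] := min_attained ne (closed_lef (c:=B) (@cont_l1 _ _)) bd cont.
exists c^T; split; first exact: cS.
move=> x hx.
by have := hc x^T; rewrite trmxK; apply; rewrite /= trmxK.
Qed.

Lemma opt_fixed (A : 'M[R]_n) (b : 'cV[R]_n) (B gamma : R) xs :
  A^T = A -> 0 < gamma -> is_optimal A b B xs ->
  is_l1ball_proj B (xs - gamma *: (A *m xs + b)) xs.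
Proof.
move=> symA g0 [xsB hopt]; split => // x hx.
set g := A *m xs + b.
have VI : 0 <= dot (x - xs) g.
  apply: (@quad_pos _ _ (2^-1 * qf A (x - xs))) => t t0 t1.
  have := hopt _ (l1_convex (ltW t0) t1 xsB hx).
  rewrite quad_expand // -/g; lra.
have -> : xs - (xs - gamma *: g) = gamma *: g by apply/matrixP => i j; rewrite !mxE; lra.
have -> : x - (xs - gamma *: g) = (x - xs) + gamma *: g by apply/matrixP => i j; rewrite !mxE; lra.
rewrite sqnormD !sqnormZ dotZr.
have := sqnorm_ge0 (x - xs).
have : 0 <= gamma * dot (x - xs) g by apply: mulr_ge0 => //; exact: ltW.
move: (gamma * dot (x - xs) g) (sqnorm2 (x - xs)) => P Q.
lra.
Qed.

Lemma pgd_contraction (A : 'M[R]_n) (L m gamma : R) d :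
  A^T = A -> (forall v, m * sqnorm2 v <= qf A v) -> (forall v, qf A v <= L * sqnorm2 v) ->
  0 < m -> 0 < L -> 0 < gamma -> gamma * L <= 1 ->
  sqnorm2 (d - gamma *: (A *m d)) <= (1 - gamma * m) * sqnorm2 d.
Proof.
move=> symA hlo hup m0 L0 g0 gL.
have hs : forall u v, dot u (A *m v) = dot v (A *m u).
  by move=> u v; rewrite dot_mulmx symA dotC.
have q0 : 0 <= qf A d.
  by apply: le_trans (hlo d); apply: mulr_ge0; [exact: ltW | exact: sqnorm_ge0].
set X := sqnorm2 (A *m d).
have hX : X <= L * qf A d.
  have h1 := hup (A *m d).
  have h2 : 0 <= qf A (d - L^-1 *: (A *m d)).
    by apply: le_trans (hlo _); apply: mulr_ge0; [exact: ltW | exact: sqnorm_ge0].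
  move: h2; rewrite /qf mulmxBr -scalemxAr !dotBl !dotBr !dotZl !dotZr (hs d (A *m d)).
  rewrite -/(qf A d) -/(qf A (A *m d)) -sqnormE -/X => h2.
  have h3 : L^-1 * (L^-1 * qf A (A *m d)) <= L^-1 * X.
    rewrite ler_pM2l ?invr_gt0 //.
    by rewrite ler_pdivrMl.
  have h4 : L^-1 * X <= qf A d.
    move: h2 h3; move: (L^-1 * (L^-1 * qf A (A *m d))) (L^-1 * X) => P Q; lra.
  by move: h4; rewrite ler_pdivrMl.
rewrite sqnormB sqnormZ dotZr -/(qf A d) -/X.
have h5a : gamma ^+ 2 * X <= gamma ^+ 2 * (L * qf A d).
  by apply: ler_wpM2l; [rewrite exprn_ge0 // ltW | exact: hX].
have h5b : gamma ^+ 2 * (L * qf A d) <= gamma * qf A d.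
  rewrite expr2 -mulrA ler_pM2l // mulrA -[leRHS]mul1r.
  by apply: ler_wpM2r.
have h6 : gamma * (m * sqnorm2 d) <= gamma * qf A d by rewrite ler_pM2l.
have -> : (1 - gamma * m) * sqnorm2 d = sqnorm2 d - gamma * (m * sqnorm2 d) by ring.
move: h5a h5b h6; move: (gamma ^+ 2 * X) (gamma ^+ 2 * (L * qf A d)) (gamma * qf A d)
  (gamma * (m * sqnorm2 d)) => P P' Q S.
lra.
Qed.

End PGD.

Lemma geo_conv (R : realType) (n : nat) (x : nat -> 'cV[R]_n) (xs : 'cV[R]_n) (rho C : R) :
  0 <= rho -> rho < 1 -> (forall k, sqnorm2 (x k - xs) <= rho ^+ k * C) ->
  x @ \oo --> xs.
Proof.
move=> r0 r1 hk.
apply/cvgrPdist_lt => e e0.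
have Cp : 0 < `|C| + 1 by rewrite ltr_wpDl // normr_ge0.
have dpos : 0 < e ^+ 2 / (`|C| + 1) by rewrite divr_gt0 // exprn_gt0.
have hr : `|rho| < 1 by rewrite ger0_norm.
have := cvg_expr hr.
move/cvgrPdist_lt/(_ _ dpos) => H.
apply: filterS H => k hk'.
have -> : `|xs - x k| = \big[Num.max/0]_ij `|(xs - x k) ij.1 ij.2| := mx_normrE _.
apply/bigmax_ltP; split => // -[i j] _ /=.
rewrite (ord1 j) !mxE distrC.
have h1 := coord_sq_le (x k - xs) i; rewrite !mxE in h1.
have h2 := hk k.
have h3 : rho ^+ k < e ^+ 2 / (`|C| + 1).
  by apply: le_lt_trans hk'; rewrite sub0r normrN ler_norm.
have h4 : rho ^+ k * C <= rho ^+ k * (`|C| + 1).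
  by rewrite ler_wpM2l ?exprn_ge0 //; apply: le_trans (ler_norm C) _; rewrite lerDl.
have h5 : rho ^+ k * (`|C| + 1) < e ^+ 2.
  by rewrite -ltr_pdivlMr.
have h6 : (x k i 0 - xs i 0) ^+ 2 < e ^+ 2 by lra.
rewrite ltr_norml; apply/andP; split; nra.
Qed.

Unset Implicit Arguments.

Theorem proposition4 (R : realType) (n : nat) (A : 'M[R]_n) (b : 'cV[R]_n)
    (B L eta : R) :
  (0 < n)%N -> spd A -> 0 < B -> is_lambda_max A L ->
  0 < eta -> eta <= n%:R^-1 ->
  (* the network computes soft-thresholding for thresholds theta >= 0 *)
  (forall (theta : R) (y : 'cV[R]_n), 0 <= theta -> net theta y = soft theta y) /\
  (* the threshold loop converges and yields the exact l1-ball projection *)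
  (forall y : 'cV[R]_n, exists thetas : R,
      0 <= thetas /\ theta_seq eta B y @ \oo --> thetas /\
      is_l1ball_proj B y (net thetas y)) /\
  (* projected gradient descent with this loop *)
  (forall (gamma : R) (x : nat -> 'cV[R]_n),
      0 < gamma -> gamma <= L^-1 ->
      (forall k, let y := x k - gamma *: (A *m x k + b) in
                 x k.+1 = net (limn (theta_seq eta B y)) y) ->
      (forall k, is_l1ball_proj B (x k - gamma *: (A *m x k + b)) (x k.+1)) /\
      exists xs : 'cV[R]_n, is_optimal A b B xs /\ x @ \oo --> xs).
Proof.
move=> n0 hspd B0 hL eta0 etan.
have P2 : forall y : 'cV[R]_n, exists ths : R, 0 <= ths /\ theta_seq eta B y @ \oo --> ths /\
    is_l1ball_proj B y (net ths y).
  by move=> y; exact: (@loop_conv R n B eta y n0 B0 eta0 etan).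
split; first by move=> th y; exact: net_soft.
split; first exact: P2.
move=> gamma x g0 gL hx.
have projk : forall k, is_l1ball_proj B (x k - gamma *: (A *m x k + b)) (x k.+1).
  move=> k; have [ths [_ [hc hp]]] := P2 (x k - gamma *: (A *m x k + b)).
  have := hx k; rewrite /= => ->.
  by rewrite (cvg_lim _ hc).
split => //.
have [m [m0 hlo]] := qf_lower n0 hspd.
have hup := qf_upper n0 hspd hL.
have symA := hspd.1.
have [r hr] := sphere_ne0 R n0.
have mL : m <= L.
  have := hlo r^T; have := hup r^T; rewrite /= in hr; rewrite hr !mulr1.
  by move=> h1 h2; exact: le_trans h2 h1.
have L0 : 0 < L by apply: lt_le_trans mL.
have gL1 : gamma * L <= 1 by move: gL; rewrite -[L^-1]mul1r ler_pdivlMr.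
have [xs hopt] := opt_exists A b B0.
exists xs; split => //.
have hfix := opt_fixed symA g0 hopt.
set rho := 1 - gamma * m.
have rho0 : 0 <= rho.
  rewrite /rho subr_ge0; apply: le_trans gL1; rewrite ler_pM2l //.
have rho1 : rho < 1 by rewrite /rho ltrBlDr ltrDl mulr_gt0.
have step : forall k, sqnorm2 (x k.+1 - xs) <= rho * sqnorm2 (x k - xs).
  move=> k; apply: le_trans (proj_nonexp (projk k) hfix) _.
  have -> : (x k - gamma *: (A *m x k + b)) - (xs - gamma *: (A *m xs + b)) =
      (x k - xs) - gamma *: (A *m (x k - xs)).
    rewrite mulmxBr; apply/matrixP => i j; rewrite !mxE; lra.
  exact: (pgd_contraction _ symA hlo hup m0 L0 g0 gL1).
have geo : forall k, sqnorm2 (x k - xs) <= rho ^+ k * sqnorm2 (x 0 - xs).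
  elim => [|k IH]; first by rewrite expr0 mul1r.
  apply: le_trans (step k) _; rewrite exprS -mulrA ler_wpM2l //.
exact: (geo_conv rho0 rho1 geo).
Qed.
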